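(* Let $T$ be a tree with $k$ vertices and $t:=\sigma(T)-1$. Let $\mathcal{H}$ be a $3$-graph on vertex set $V$, let $S_1,S_2\subseteq V$ be two distinct $t$-subsets, and let $V_1,V_2\subseteq V\setminus(S_1\cup S_2)$ be two sets with $V_1\cap V_2\ne\emptyset$. Suppose there are graphs $G_1$ on $V_1$ and $G_2$ on $V_2$ such that for each $i\in\{1,2\}$: (i) $d_{G_i}(v)\ge 3k$ for all $v\in V_i$, and (ii) $G_i\subseteq L_{\mathcal{H}}(v)$ for all $v\in S_i$. Then $\mathcal{H}$ contains a copy of $T^3$.
   Context: For a graph $F$, $|F|$ is its number of edges and $F-I$ the subgraph induced on $V(F)\setminus I$; $\sigma(F)=\min\{|I|+|F-I| : I\text{ independent in }F\}$. For a $3$-graph $\mathcal{H}$, the link of a vertex $v$ is the graph $L_{\mathcal{H}}(v)=\{uw: uvw\in\mathcal{H}\}$. The expansion $T^3$ is the $3$-graph obtained from $T$ by adding to each edge a new vertex, distinct edges receiving distinct new vertices. *)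

(* Defs.v *)
From mathcomp Require Import all_boot.
Set Implicit Arguments. Unset Strict Implicit. Unset Printing Implicit Defensive.

Definition is_graph (U : finType) (E : {set {set U}}) : Prop :=
  forall e, e \in E -> #|e| = 2.

Definition adj (U : finType) (E : {set {set U}}) : rel U :=
  fun x y => (x != y) && ([set x; y] \in E).

Definition gconnected (U : finType) (E : {set {set U}}) : Prop :=
  forall x y : U, connect (adj E) x y.

Definition acyclic (U : finType) (E : {set {set U}}) : Prop :=
  forall c : seq U, uniq c -> 2 < size c -> ~~ cycle (adj E) c.

Definition is_tree (U : finType) (E : {set {set U}}) : Prop :=
  [/\ is_graph E, 0 < #|U|, gconnected E & acyclic E].

Definition independent (U : finType) (E : {set {set U}}) (I : {set U}) : bool :=
  [forall e in E, ~~ (e \subset I)].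

Definition edges_outside (U : finType) (E : {set {set U}}) (I : {set U}) : nat :=
  #|[set e in E | [disjoint e & I]]|.

Definition sigma (U : finType) (E : {set {set U}}) : nat :=
  \big[minn/#|E|]_(I : {set U} | independent E I) (#|I| + edges_outside E I).

Definition is_3graph (V : finType) (H : {set {set V}}) : Prop :=
  forall e, e \in H -> #|e| = 3.

Definition link (V : finType) (H : {set {set V}}) (v : V) : {set {set V}} :=
  [set e : {set V} | [&& #|e| == 2, v \notin e & v |: e \in H]].

Definition deg (V : finType) (G : {set {set V}}) (v : V) : nat :=
  #|[set e in G | v \in e]|.

(* H contains a copy of the expansion T^3 of the graph (U, E):
   an injective vertex map phi, and an injective choice psi of new vertices
   (outside the image of phi) for the edges, such that each expanded edge
   phi(x) phi(y) psi(xy) is an edge of H. *)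
Definition contains_expansion (U V : finType) (E : {set {set U}})
    (H : {set {set V}}) : Prop :=
  exists (phi : U -> V) (psi : {set U} -> V),
    [/\ injective phi,
        {in E &, injective psi},
        (forall e, e \in E -> forall x : U, psi e != phi x) &
        (forall e, e \in E -> psi e |: (phi @: e) \in H)].

(* Main.v *)
Require Import Defs.
From mathcomp Require Import all_boot zify.
Set Implicit Arguments. Unset Strict Implicit. Unset Printing Implicit Defensive.

Lemma adjC (U : finType) (E : {set {set U}}) x y : adj E x y = adj E y x.
Proof. by rewrite /adj eq_sym setUC. Qed.

Section TreeOrder.
Variables (U : finType) (E : {set {set U}}) (r : U).
Hypothesis hT : is_tree E.

Definition rs (s : seq U) : rel U := [rel a b | [&& adj E a b, a \in s & b \in s]].

Definition Inv (s : seq U) :=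
  [/\ uniq s, r \in s /\ index r s = 0,
   (forall x, x \in s -> x != r -> exists2 y, adj E x y & index y s < index x s),
   (forall x y z, x \in s -> adj E x y -> adj E x z -> index y s < index x s ->
        index z s < index x s -> y = z) &
   (forall a, a \in s -> connect (rs s) r a)].

Lemma path_rs_all (s : seq U) x p : path (rs s) x p -> all (fun z => z \in s) p.
Proof.
elim: p x => //= a p IH x /andP[/and3P[_ _ ha] hp]; by rewrite ha (IH a).
Qed.

Lemma closed_all (s : seq U) : r \in s -> (forall a b, a \in s -> adj E a b -> b \in s) ->
  forall z, z \in s.
Proof.
move=> hr hcl z; case: hT => _ _ hc _.
have /connectP[p hp ->] := hc r z.
elim: p r hr hp => //= a p IH x hx /andP[ha hp].
by apply: (IH a) => //; apply: hcl ha.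
Qed.

Lemma idx_rcons (s : seq U) y x : x \in s -> index x (rcons s y) = index x s.
Proof. by move=> hx; rewrite -cats1 index_cat hx. Qed.

Lemma idx_rcons_new (s : seq U) y : y \notin s -> index y (rcons s y) = size s.
Proof. by move=> hy; rewrite -cats1 index_cat (negbTE hy) /= eqxx addn0. Qed.

Lemma idx_rcons_lt (s : seq U) y a : index a (rcons s y) < size s -> a \in s.
Proof. by rewrite -cats1 index_cat; case: ifP => // _; rewrite ltnNge leq_addr. Qed.

Lemma idx_lt_mem (s : seq U) x y : index y s < index x s -> x \in s -> y \in s.
Proof. by move=> h hx; rewrite -index_mem; apply: ltn_trans h _; rewrite index_mem. Qed.

Lemma no_cycle (s : seq U) y x1 x2 : y \notin s -> x1 \in s -> x1 != x2 -> adj E y x1 -> adj E y x2 ->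
  connect (rs s) x1 x2 -> False.
Proof.
move=> hy hx1 hne h1 h2 /connectP[p hp hl].
case: (shortenP hp) hl => p' hp' hu _ hl.
case: hT => _ _ _ hac.
have hall := path_rs_all hp'.
have hyn : y \notin x1 :: p'.
  rewrite inE negb_or; apply/andP; split; first by apply: contraNneq hy => ->.
  by apply: contra hy => hyp; move/allP: hall; apply.
have := hac (y :: x1 :: p'); rewrite cons_uniq hyn hu => /(_ isT).
case: p' hp' hu hall hyn hl => [|b p'] hp' hu hall hyn hl.
  by move: hne; rewrite hl /= eqxx.
move=> /(_ isT); rewrite /= h1 /= rcons_path.
have /= /andP[-> ->] : path (adj E) x1 (b :: p').
  by apply: sub_path hp' => u v /and3P[].
by rewrite /= -[last b p']/(last x1 (b :: p')) -hl (adjC E _ y) h2.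
Qed.

Lemma extend (s : seq U) : Inv s -> size s < #|U| -> exists s', Inv s' /\ size s' = (size s).+1.
Proof.
case=> hu [hr hr0] hex hun hcon hsz.
have [hcl|] := boolP [forall a, forall b, (a \in s) ==> adj E a b ==> (b \in s)].
  have hall : forall z, z \in s.
    apply: closed_all => // a b ha hab.
    by move/forallP: hcl => /(_ a) /forallP /(_ b); rewrite ha hab.
  have : #|U| <= size s.
    by rewrite cardE; apply: uniq_leq_size; [exact: enum_uniq | move=> z _; exact: hall].
  by rewrite leqNgt hsz.
rewrite negb_forall => /existsP[x]; rewrite negb_forall => /existsP[y].
rewrite negb_imply => /andP[hx]; rewrite negb_imply => /andP[hxy hy].
exists (rcons s y); split; last by rewrite size_rcons.
have hin z : z \in rcons s y = (z == y) || (z \in s) by rewrite mem_rcons inE.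
split.
- by rewrite rcons_uniq hy hu.
- by rewrite hin hr orbT idx_rcons.
- move=> z; rewrite hin => /orP[/eqP ->|hz] hzr.
    exists x; first by rewrite adjC.
    by rewrite idx_rcons // idx_rcons_new // index_mem.
  have [w hw hwi] := hex z hz hzr.
  exists w => //; rewrite !idx_rcons //; exact: idx_lt_mem hwi hz.
- move=> z a b; rewrite hin => /orP[/eqP ->|hz] ha hb.
    rewrite idx_rcons_new //.
    move=> hia hib.
    have has := idx_rcons_lt hia.
    have hbs := idx_rcons_lt hib.
    apply/eqP/negPn/negP => hne; apply: (no_cycle hy has hne ha hb).
    have hsym : connect_sym (rs s).
      by apply: sym_connect_sym => u v; rewrite /rs /= adjC; case: (u \in s); case: (v \in s); rewrite /= ?andbF ?andbT.
    by apply: (connect_trans (y := r)); [rewrite hsym|]; apply: hcon.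
  move=> hia hib; rewrite (idx_rcons _ hz) in hia hib.
  have hzs : index z s < size s by rewrite index_mem.
  have has := idx_rcons_lt (ltn_trans hia hzs).
  have hbs := idx_rcons_lt (ltn_trans hib hzs).
  rewrite !idx_rcons // in hia hib; exact: hun hz ha hb hia hib.
- move=> a; rewrite hin => /orP[/eqP ->|ha].
    apply: (connect_trans (y := x)).
      apply: connect_sub (hcon x hx) => u v huv; apply: connect1.
      by move: huv => /and3P[h1 hu' hv']; rewrite /rs /= h1 !hin hu' hv' !orbT.
    by apply: connect1; rewrite /rs /= hxy !hin eqxx hx !orbT.
  apply: connect_sub (hcon a ha) => u v huv; apply: connect1.
  by move: huv => /and3P[h1 hu' hv']; rewrite /rs /= h1 !hin hu' hv' !orbT.
Qed.

Lemma build n : n < #|U| -> exists s, Inv s /\ size s = n.+1.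
Proof.
elim: n => [_|n IH hn].
  exists [:: r]; split => //; split => //.
  - by rewrite inE eqxx /= eqxx.
  - by move=> x; rewrite inE => ->.
  - by move=> x y z; rewrite inE => /eqP -> _ _; rewrite /= eqxx.
  - by move=> a; rewrite inE => /eqP ->; exact: connect0.
have [s [hs hsz]] := IH (ltnW hn).
have := extend hs; rewrite hsz => /(_ hn) [s' [hs' hsz']].
by exists s'.
Qed.

Lemma tree_order : exists (rank : U -> nat) (par : U -> U),
   [/\ injective rank, rank r = 0, (forall x, rank x < #|U|),
       (forall x, x != r -> adj E x (par x) && (rank (par x) < rank x)) &
       (forall x y, adj E x y -> rank y < rank x -> y = par x)].
Proof.
have hU : 0 < #|U| by case: hT.
have := @build ( #|U|.-1); rewrite prednK // => /(_ (leqnn _)) [s [[hu [hr hr0] hex hun hcon] hsz]].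
have hall : forall x, x \in s.
  have hc : #|[pred x | x \in s]| = #|[pred x : U | true]|.
    by rewrite (card_uniqP hu) hsz; apply: eq_card => x.
  by have /(subset_cardP hc) h := subset_predT [pred x | x \in s]; move=> x; rewrite -[x \in s]/(x \in [pred x | x \in s]) h.
pose par x := odflt x [pick y | adj E x y && (index y s < index x s)].
have hpar x : x != r -> adj E x (par x) && (index (par x) s < index x s).
  move=> hx; rewrite /par; case: pickP => [y //|h0].
  by have [y hy hi] := hex x (hall x) hx; move: (h0 y); rewrite hy hi.
exists (fun x => index x s), par; split => //.
- by move=> x y hxy; rewrite -(nth_index x (hall x)) hxy nth_index.
- by move=> x; rewrite -hsz index_mem.
- move=> x y hxy hi.
  have hxr : x != r by apply: contraTneq hi => ->; rewrite hr0.
  by have /andP[h1 h2] := hpar x hxr; apply: (hun x) => //.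
Qed.
End TreeOrder.

Lemma edge2 (U : finType) (E : {set {set U}}) e : is_graph E -> e \in E ->
  exists x y, [/\ x != y, e = [set x; y] & adj E x y].
Proof.
move=> hg he; have /eqP/cards2P[x [y [hxy exy]]] := hg e he.
by exists x, y; split => //; rewrite /adj hxy -exy he.
Qed.

Lemma edge_par (U : finType) (E : {set {set U}}) (r : U) (rank : U -> nat) (par : U -> U) :
  is_graph E -> injective rank -> rank r = 0 ->
  (forall x y, adj E x y -> rank y < rank x -> y = par x) ->
  forall e, e \in E -> exists2 a, a != r & e = [set a; par a].
Proof.
move=> hg hinj hr hun e he; have [x [y [hxy -> hadj]]] := edge2 hg he.
have hne : rank x != rank y by apply: contra hxy => /eqP/hinj ->.
case: (ltngtP (rank x) (rank y)) hne => // hlt _.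
  exists y; first by apply: contraTneq hlt => ->; rewrite hr.
  by rewrite setUC -(hun y x) // adjC.
exists x; first by apply: contraTneq hlt => ->; rewrite hr.
by rewrite -(hun x y).
Qed.

Lemma fresh (V : finType) (G : {set {set V}}) (v : V) (X : {set V}) :
  is_graph G -> #|X| < deg G v -> exists2 a, a \notin X & [set v; a] \in G.
Proof.
move=> hg hlt.
pose N := [set a | [set v; a] \in G].
have hsub : [set e in G | v \in e] \subset [set [set v; a] | a in N].
  apply/subsetP => e; rewrite inE => /andP[he hv].
  have /eqP/cards2P[x [y [hxy exy]]] := hg e he.
  move: hv; rewrite exy !inE => /orP[]/eqP hv; subst.
    by apply/imsetP; exists y => //; rewrite inE.
  by apply/imsetP; exists x; rewrite ?inE setUC.
have hN : #|X| < #|N|.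
  apply: (leq_trans hlt); apply: (leq_trans (subset_leq_card hsub)); exact: leq_imset_card.
have : ~~ (N \subset X) by apply: contraTN hN => /subset_leq_card; rewrite leqNgt.
by case/subsetPn => a; rewrite inE => ha hX; exists a.
Qed.

Definition pieces (U : finType) (E : {set {set U}}) (I : {set U}) :=
  [set [set u] | u in I] :|: [set e in E | [disjoint e & I]].

Section Greedy.
Variables (U V : finType) (E : {set {set U}}) (H : {set {set V}}) (I : {set U}) (w0 : U) (c : V).
Variables (G : bool -> {set {set V}}) (Vs : bool -> {set V}) (side : {set U} -> bool) (cen : {set U} -> V).
Hypothesis hT : is_tree E.
Hypothesis hI : independent E I.
Hypothesis hw0 : w0 \notin I.
Hypothesis hG : forall b, is_graph (G b).
Hypothesis hGV : forall b e, e \in G b -> e \subset Vs b.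
Hypothesis hdeg : forall b v, v \in Vs b -> 3 * #|U| <= deg (G b) v.
Hypothesis hc : forall b, c \in Vs b.
Hypothesis hcenV : forall X b, cen X \notin Vs b.
Hypothesis hcen : {in pieces E I &, injective cen}.
Hypothesis hlinkI : forall u e, u \in I -> e \in E -> u \in e -> G (side e) \subset link H (cen [set u]).
Hypothesis hlinkE : forall e, e \in E -> [disjoint e & I] -> G (side e) \subset link H (cen e).
Hypothesis hside : forall y e1 e2, y \notin I -> y != w0 -> e1 \in E -> e2 \in E -> y \in e1 -> y \in e2 ->
  side e1 = side e2.

Variables (rank : U -> nat) (par : U -> U).
Hypothesis hinj : injective rank.
Hypothesis hr0 : rank w0 = 0.
Hypothesis hrU : forall x, rank x < #|U|.
Hypothesis hpar : forall x, x != w0 -> adj E x (par x) && (rank (par x) < rank x).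
Hypothesis hun : forall x y, adj E x y -> rank y < rank x -> y = par x.

Definition W n := [set x | rank x < n].
Definition F n := [set e in E | e \subset W n].
Definition Vall := Vs true :|: Vs false.

Record GInv n (phi : U -> V) (psi : {set U} -> V) : Prop := {
  i_a : {in W n &, injective phi};
  i_b : {in F n &, injective psi};
  i_c : forall e x, e \in F n -> x \in W n -> psi e != phi x;
  i_d : forall e, e \in F n -> psi e |: phi @: e \in H;
  i_e : forall x, x \in W n -> x \in I -> phi x = cen [set x];
  i_f : forall x e, x \in W n -> x \notin I -> e \in E -> x \in e -> phi x \in Vs (side e);
  i_f0 : forall x, x \in W n -> x \notin I -> phi x \in Vall;
  i_g : forall e, e \in F n -> [disjoint e & I] -> psi e = cen e;
  i_h : forall e, e \in F n -> ~~ [disjoint e & I] -> psi e \in Vs (side e) }.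

Lemma hg : is_graph E. Proof. by case: hT. Qed.

Lemma cenVall X : cen X \notin Vall.
Proof. by rewrite !inE negb_or !hcenV. Qed.

Lemma mW n x : rank x = n -> forall y, (y \in W n.+1) = (y == x) || (y \in W n).
Proof.
move=> hx y; rewrite !inE ltnS leq_eqVlt.
have -> : (rank y == n) = (y == x) by apply/eqP/eqP => [h|->//]; apply: hinj; rewrite h hx.
by [].
Qed.

Lemma mF n x : rank x = n -> x != w0 -> forall e,
  (e \in F n.+1) = (e == [set x; par x]) || (e \in F n).
Proof.
move=> hx hxw e; have /andP[hadj hlt] := hpar hxw.
apply/idP/idP.
- rewrite inE => /andP[he hsub].
  have [a haw hea] := edge_par hg hinj hr0 hun he.
  have /andP[_ hla] := hpar haw.
  move: hsub; rewrite hea !subUset !sub1set !inE !ltnS => /andP[ha hpa].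
  have [hlt'|heq] := boolP (rank a < n).
    apply/orP; right; rewrite -hea he /= hea subUset !sub1set !inE; apply/andP; split; lia.
  have -> : a = x by apply: hinj; rewrite hx; apply/eqP; rewrite eqn_leq ha leqNgt heq.
  by rewrite eqxx.
- case/orP => [/eqP ->|]; last first.
    rewrite !inE => /andP[-> /subsetP hs] /=; apply/subsetP => z /hs; rewrite !inE; exact: ltnW.
  move: hadj; rewrite /adj => /andP[_ hex].
  rewrite /F inE hex /= subUset !sub1set !inE; apply/andP; split; lia.
Qed.


Lemma step_gen n x phi psi A B : GInv n phi psi -> rank x = n -> x != w0 ->
  (forall y, y \in W n -> A != phi y) ->
  (forall e, e \in F n -> B != psi e) ->
  (forall e, e \in F n -> psi e != A) ->
  (forall y, y \in W n -> B != phi y) ->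
  B != A ->
  B |: [set A; phi (par x)] \in H ->
  (x \in I -> A = cen [set x]) ->
  (x \notin I -> forall e, e \in E -> x \in e -> A \in Vs (side e)) ->
  ([disjoint [set x; par x] & I] -> B = cen [set x; par x]) ->
  (~~ [disjoint [set x; par x] & I] -> B \in Vs (side [set x; par x])) ->
  GInv n.+1 (fun y => if y == x then A else phi y)
           (fun e => if e == [set x; par x] then B else psi e).
Proof.
move=> [ia ib ic id ie iif if0 ig ih] hx hxw h1 h2 h3 h4 h5 h6 h7 h8 h9 h10.
have /andP[hadj hlt] := hpar hxw.
have hex : [set x; par x] \in E by move: hadj => /andP[].
have hyx y : y \in W n -> (y == x) = false.
  by rewrite inE => hy; apply/eqP => hyx; move: hy; rewrite hyx hx ltnn.
have hpW : par x \in W n by rewrite inE -hx.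
have hxe e : e \in F n -> x \notin e.
  by rewrite inE => /andP[_ /subsetP hs]; apply/negP => /hs; rewrite inE hx ltnn.
have hex' e : e \in F n -> (e == [set x; par x]) = false.
  by move=> he; apply/negbTE; apply: contraTneq (hxe e he) => ->; rewrite !inE eqxx.
have hFE e : e \in F n -> e \in E by rewrite inE => /andP[].
split.
- move=> y z; rewrite !(mW hx) => /orP[/eqP->|hy] /orP[/eqP->|hz] //=.
  + by rewrite eqxx (hyx z hz) => h; move: (h1 z hz); rewrite h eqxx.
  + by rewrite eqxx (hyx y hy) => h; move: (h1 y hy); rewrite h eqxx.
  + by rewrite (hyx y hy) (hyx z hz); exact: ia.
- move=> e f; rewrite !(mF hx hxw) => /orP[/eqP->|he] /orP[/eqP->|hf] //=.
  + by rewrite eqxx (hex' f hf) => h; move: (h2 f hf); rewrite h eqxx.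
  + by rewrite eqxx (hex' e he) => h; move: (h2 e he); rewrite h eqxx.
  + by rewrite (hex' e he) (hex' f hf); exact: ib.
- move=> e y; rewrite (mF hx hxw) (mW hx) => /orP[/eqP->|he] /orP[/eqP->|hy].
  + by rewrite !eqxx.
  + by rewrite eqxx (hyx y hy); exact: h4.
  + by rewrite eqxx (hex' e he); exact: h3.
  + by rewrite (hex' e he) (hyx y hy); exact: ic.
- move=> e; rewrite (mF hx hxw) => /orP[/eqP->|he].
    by rewrite eqxx imsetU1 imset_set1 eqxx (hyx _ hpW).
  rewrite (hex' e he) (@eq_in_imset _ _ _ phi); first exact: id.
  by move=> y hy /=; have /negbTE -> : y != x by apply: contraNneq (hxe e he) => <-.
- move=> y; rewrite (mW hx) => /orP[/eqP->|hy]; first by rewrite eqxx; exact: h7.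
  by rewrite (hyx y hy); exact: ie.
- move=> y e; rewrite (mW hx) => /orP[/eqP->|hy]; first by rewrite eqxx => a1 a2 a3; apply: h8.
  by rewrite (hyx y hy); exact: iif.
- move=> y; rewrite (mW hx) => /orP[/eqP->|hy]; last by rewrite (hyx y hy); exact: if0.
  rewrite eqxx => hxI; have := h8 hxI _ hex; rewrite !inE eqxx /= => /(_ isT).
  by case: (side _) => ->; rewrite ?orbT.
- move=> e; rewrite (mF hx hxw) => /orP[/eqP->|he]; first by rewrite eqxx.
  by rewrite (hex' e he); exact: ig.
- move=> e; rewrite (mF hx hxw) => /orP[/eqP->|he]; first by rewrite eqxx.
  by rewrite (hex' e he); exact: ih.
Qed.

Lemma link_mem (G0 : {set {set V}}) s a b : G0 \subset link H s -> [set a; b] \in G0 ->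
  s |: [set a; b] \in H.
Proof. by move=> /subsetP hs /hs; rewrite inE => /and3P[]. Qed.

Lemma vall_of b v : v \in Vs b -> v \in Vall.
Proof. by rewrite inE; case: b => ->; rewrite ?orbT. Qed.

Lemma pieceI u : u \in I -> [set u] \in pieces E I.
Proof. by move=> hu; rewrite inE; apply/orP; left; apply/imsetP; exists u. Qed.

Lemma pieceE e : e \in E -> [disjoint e & I] -> e \in pieces E I.
Proof. by move=> he hd; rewrite inE; apply/orP; right; rewrite inE he. Qed.

Lemma edge_ne1 e u : e \in E -> e != [set u].
Proof. by move=> he; apply/eqP => h; have := hg he; rewrite h cards1. Qed.

Lemma set3 (a b d : V) : b |: [set a; d] = a |: [set d; b].
Proof. by apply/setP => z; rewrite !inE; do 3 case: (z == _). Qed.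

Lemma Inv_eq n n' phi psi : W n' = W n -> F n' = F n -> GInv n phi psi -> GInv n' phi psi.
Proof. by move=> hW hF [q1 q2 q3 q4 q5 q6 q7 q8 q9]; split; rewrite ?hW ?hF. Qed.

Lemma step n phi psi : 1 <= n -> n < #|U| -> GInv n phi psi -> exists phi' psi', GInv n.+1 phi' psi'.
Proof.
move=> hn1 hnU hinv; case: (pickP [pred x | rank x == n]) => [x /eqP hx | hnone]; last first.
  have hW : W n.+1 = W n.
    by apply/setP => y; rewrite !inE ltnS leq_eqVlt; move: (hnone y) => /= ->.
  have hF : F n.+1 = F n by apply/setP => e; rewrite /F !inE hW.
  by exists phi, psi; apply: Inv_eq hinv.
have hinv0 := hinv; case: hinv0 => ia ib ic id ie iif if0 ig ih.
have hxw : x != w0 by apply: contraTneq hn1 => hxw; rewrite -hx hxw hr0.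
have /andP[hadj hlt] := hpar hxw.
have hex : [set x; par x] \in E by move: hadj => /andP[].
have hpW : par x \in W n by rewrite inE -hx.
have hxW : x \notin W n by rewrite inE hx ltnn.
have hxex : x \in [set x; par x] by rewrite !inE eqxx.
have hpex : par x \in [set x; par x] by rewrite !inE eqxx orbT.
have hFE e : e \in F n -> e \in E by rewrite inE => /andP[].
have hxe e : e \in F n -> x \notin e.
  by rewrite inE => /andP[_ /subsetP hs]; apply/negP => /hs; rewrite inE hx ltnn.
pose Used := phi @: W n :|: psi @: F n.
have hWc : #|W n| < #|U|.
  rewrite -(cardsT U); apply: proper_card; rewrite properT; apply/negP => /eqP hWT.
  by move: hxW; rewrite hWT inE.
have hUsed : #|Used| <= 2 * #|W n|.
  rewrite (leq_trans (leq_card_setU _ _)) // mul2n -addnn leq_add ?leq_imset_card //.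
  apply: (leq_trans _ (leq_imset_card (fun y => psi [set y; par y]) (W n))).
  apply: subset_leq_card; apply/subsetP => z /imsetP[e he ->].
  have [a haw hea] := edge_par hg hinj hr0 hun (hFE e he).
  apply/imsetP; exists a; last by rewrite hea.
  by move: he; rewrite inE hea => /andP[_ /subsetP]; apply; rewrite !inE eqxx.
have hfr b v (X : {set V}) : v \in Vs b -> #|X| <= #|Used|.+1 ->
    exists2 a, a \notin X & [set v; a] \in G b.
  move=> hv hX; apply: fresh => //; apply: (leq_trans _ (hdeg hv)); lia.
have hnU1 a : a \notin Used -> (forall y, y \in W n -> a != phi y) /\ (forall e, e \in F n -> a != psi e).
  move=> ha; split => [y hy|e he]; apply: contraNneq ha => ->; rewrite inE.
    by rewrite imset_f.
  by rewrite imset_f ?orbT.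
have hGv b a d : [set a; d] \in G b -> d \in Vs b.
  by move=> /hGV /subsetP; apply; rewrite !inE eqxx orbT.
have hGv' b a d : [set a; d] \in G b -> a \in Vs b.
  by move=> /hGV /subsetP; apply; rewrite !inE eqxx.
have hcenne X Y : X \in pieces E I -> Y \in pieces E I -> X != Y -> cen X != cen Y.
  by move=> hX hY; apply: contra => /eqP /hcen; move=> /(_ hX hY) ->.
have hyx y : y \in W n -> y != x by move=> hy; apply: contraNneq hxW => <-.
have hxfree e : e \in F n -> e != [set x; par x].
  by move=> he; apply: contraNneq (hxe e he) => ->.
have hUW y : y \in W n -> y \in I -> phi y = cen [set y] := ie y.
have hpsi_cen X : X \in pieces E I -> (forall e, e \in F n -> [disjoint e & I] -> e != X) ->
    forall e, e \in F n -> psi e != cen X.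
  move=> hX hne e he; have [hd|hd] := boolP [disjoint e & I].
    by rewrite (ig e he hd); apply: hcenne => //; [exact: pieceE (hFE e he) hd | exact: hne].
  by have /vall_of hv := ih e he hd; apply: contraTneq hv => ->; rewrite cenVall.
have hphi_cen X : X \in pieces E I -> (forall y, y \in W n -> y \in I -> [set y] != X) ->
    forall y, y \in W n -> phi y != cen X.
  move=> hX hne y hy; have [hyI|hyI] := boolP (y \in I).
    by rewrite (ie y hy hyI); apply: hcenne => //; [exact: pieceI | exact: hne].
  by have hv := if0 y hy hyI; apply: contraTneq hv => ->; rewrite cenVall.
have [hxI|hxI] := boolP (x \in I).
  have hpI : par x \notin I.
    apply/negP => hpI; move/forallP: hI => /(_ [set x; par x]); rewrite hex /=.
    by rewrite subUset !sub1set hxI hpI.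
  have hpV := iif (par x) [set x; par x] hpW hpI hex hpex.
  have [B hBU hBG] := hfr _ _ Used hpV (leqnSn _).
  have [hB1 hB2] := hnU1 B hBU.
  exists (fun y => if y == x then cen [set x] else phi y),
         (fun e => if e == [set x; par x] then B else psi e).
  apply: (step_gen hinv hx hxw) => //.
  - move=> y hy; rewrite eq_sym; apply: (hphi_cen _ (pieceI hxI)) hy => z hz _.
    by apply: contra (hyx z hz) => /eqP/set1_inj ->.
  - apply: (hpsi_cen _ (pieceI hxI)) => e he _; exact: edge_ne1 (hFE e he).
  - by apply: contraTneq (vall_of (hGv _ _ _ hBG)) => ->; rewrite cenVall.
  - by rewrite set3; apply: link_mem (hlinkI hxI hex hxex) hBG.
  - by rewrite hxI.
  - by move=> hd; move: (disjointFr hd hxex); rewrite hxI.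
  - by move=> _; exact: hGv _ _ _ hBG.
have hside_x e : e \in E -> x \in e -> side e = side [set x; par x].
  by move=> he hxe'; exact: hside hxI hxw he hex hxe' hxex.
have [hpI|hpI] := boolP (par x \in I).
  have [A hAU hAG] := hfr (side [set x; par x]) c Used (hc _) (leqnSn _).
  have hAV := hGv _ _ _ hAG.
  have hsz : #|A |: Used| <= #|Used|.+1 by rewrite cardsU1; case: (A \notin Used).
  have [B hBU hBG] := hfr (side [set x; par x]) A (A |: Used) hAV hsz.
  have hBA : B != A by apply: contraNneq hBU => ->; rewrite setU11.
  have hBU' : B \notin Used by apply: contra hBU => h; rewrite in_setU1 h orbT.
  have [hA1 hA2] := hnU1 A hAU; have [hB1 hB2] := hnU1 B hBU'.
  exists (fun y => if y == x then A else phi y),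
         (fun e => if e == [set x; par x] then B else psi e).
  apply: (step_gen hinv hx hxw) => //.
  - by move=> e he; rewrite eq_sym; exact: hA2.
  - rewrite (ie _ hpW hpI).
    have := link_mem (hlinkI hpI hex hpex) hBG.
    have -> : B |: [set A; cen [set par x]] = cen [set par x] |: [set A; B]; last by [].
    by apply/setP => z; rewrite !inE; do 3 case: (z == _).
  - by rewrite (negbTE hxI).
  - by move=> _ e he hxe'; rewrite (hside_x e he hxe').
  - by move=> hd; move: (disjointFr hd hpex); rewrite hpI.
  - by move=> _; exact: hGv _ _ _ hBG.
have hd : [disjoint [set x; par x] & I].
  rewrite disjoint_subset; apply/subsetP => z; rewrite !inE => /orP[]/eqP ->; by [].
have hpV := iif (par x) [set x; par x] hpW hpI hex hpex.
have [A hAU hAG] := hfr _ _ Used hpV (leqnSn _).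
have hAV := hGv _ _ _ hAG.
have [hA1 hA2] := hnU1 A hAU.
exists (fun y => if y == x then A else phi y),
       (fun e => if e == [set x; par x] then cen [set x; par x] else psi e).
apply: (step_gen hinv hx hxw) => //.
- move=> e he; rewrite eq_sym; apply: (hpsi_cen _ (pieceE hex hd)) he => e' he' _.
  exact: hxfree.
- by move=> e he; rewrite eq_sym; exact: hA2.
- move=> y hy; rewrite eq_sym; apply: (hphi_cen _ (pieceE hex hd)) hy => z hz _.
  by rewrite eq_sym; exact: edge_ne1.
- by apply: contraTneq (vall_of hAV) => <-; rewrite cenVall.
- by rewrite [[set A; _]]setUC; exact: link_mem (hlinkE hex hd) hAG.
- by rewrite (negbTE hxI).
- by move=> _ e he hxe'; rewrite (hside_x e he hxe').
- by rewrite hd.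
Qed.

Lemma W1 y : (y \in W 1) = (y == w0).
Proof.
rewrite inE ltnS leqn0; apply/eqP/eqP => [h|->//]; apply: hinj; by rewrite h hr0.
Qed.

Lemma F1 e : (e \in F 1) = false.
Proof.
apply/negbTE; rewrite inE; apply/negP => /andP[he hs].
have : e \subset [set w0] by apply/subsetP => z /(subsetP hs); rewrite W1 inE.
move/subset_leq_card; rewrite cards1 (hg he) //.
Qed.

Lemma base : GInv 1 (fun _ => c) (fun _ => c).
Proof.
split; try by move=> e; rewrite F1.
- by move=> y z; rewrite !W1 => /eqP -> /eqP ->.
- by move=> y; rewrite W1 => /eqP ->; rewrite (negbTE hw0).
- by move=> *; exact: hc.
- by move=> *; exact: vall_of (hc true).
Qed.

Lemma greedy_main : contains_expansion E H.
Proof.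
have hU : 0 < #|U| by case: hT.
have hind n : 1 <= n -> n <= #|U| -> exists phi psi, GInv n phi psi.
  elim: n => [//|n IH] _ hn.
  have [hn0|hn0] := posnP n; first by subst; exists (fun _ => c), (fun _ => c); exact: base.
  have [phi [psi hinv]] := IH hn0 (ltnW hn).
  exact: step hn0 hn hinv.
have [phi [psi [ia ib ic id _ _ _ _ _]]] := hind #|U| hU (leqnn _).
have hWT y : y \in W #|U| by rewrite inE hrU.
have hFT e : e \in E -> e \in F #|U|.
  by move=> he; rewrite inE he; apply/subsetP => z _; exact: hWT.
exists phi, psi; split.
- by move=> y z h; apply: ia => //; exact: hWT.
- by move=> e f he hf h; apply: ib => //; exact: hFT.
- by move=> e he y; apply: ic; [exact: hFT | exact: hWT].
- by move=> e he; apply: id; exact: hFT.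
Qed.

End Greedy.

Lemma greedy (U V : finType) (E : {set {set U}}) (H : {set {set V}}) (I : {set U}) (w0 : U) (c : V)
  (G : bool -> {set {set V}}) (Vs : bool -> {set V}) (side : {set U} -> bool) (cen : {set U} -> V) :
  is_tree E -> independent E I -> w0 \notin I ->
  (forall b, is_graph (G b)) ->
  (forall b e, e \in G b -> e \subset Vs b) ->
  (forall b v, v \in Vs b -> 3 * #|U| <= deg (G b) v) ->
  (forall b, c \in Vs b) ->
  (forall X b, cen X \notin Vs b) ->
  {in pieces E I &, injective cen} ->
  (forall u e, u \in I -> e \in E -> u \in e -> G (side e) \subset link H (cen [set u])) ->
  (forall e, e \in E -> [disjoint e & I] -> G (side e) \subset link H (cen e)) ->
  (forall y e1 e2, y \notin I -> y != w0 -> e1 \in E -> e2 \in E -> y \in e1 -> y \in e2 ->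
     side e1 = side e2) ->
  contains_expansion E H.
Proof.
move=> hT hI hw0 hG hGV hdeg hc hcenV hcen hlI hlE hside.
have [rank [par [hinj hr0 hrU hpar hun]]] := tree_order w0 hT.
exact: (greedy_main hT hI hw0 hG hGV hdeg hc hcenV hcen hlI hlE hside hinj hr0 hrU hpar hun).
Qed.

Lemma cost0 (U : finType) (E : {set {set U}}) : is_graph E ->
  independent E set0 /\ #|@set0 U| + edges_outside E set0 = #|E|.
Proof.
move=> hg; split.
  apply/forallP => e; apply/implyP => he; rewrite subset0; apply/eqP => h.
  by have := hg e he; rewrite h cards0.
rewrite cards0 add0n /edges_outside.
have -> : [set e in E | [disjoint e & @set0 U]] = E.
  by apply/setP => e; rewrite inE disjoint_sym; case: (e \in E) => //=; apply/pred0P => z; rewrite /= inE.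
by [].
Qed.

Lemma sigma_att (U : finType) (E : {set {set U}}) : is_graph E ->
  exists2 I, independent E I & sigma E = #|I| + edges_outside E I.
Proof.
move=> hg; rewrite /sigma.
apply: (big_ind (fun m => exists2 I, independent E I & m = #|I| + edges_outside E I)).
- by have [h1 h2] := cost0 hg; exists set0.
- move=> x y [I1 h1 e1] [I2 h2 e2] /=; case: (leqP x y) => hxy.
    by exists I1.
  by exists I2.
- by move=> I hI; exists I.
Qed.

Lemma sigma_le (U : finType) (E : {set {set U}}) : sigma E <= #|E|.
Proof.
rewrite /sigma; elim: (index_enum _) => [|i r IH]; rewrite ?big_nil ?big_cons //.
by case: ifP => // _; exact: leq_trans (geq_minr _ _) IH.
Qed.

Lemma inj_into (T1 T2 : finType) (A : {set T1}) (B : {set T2}) (b0 : T2) :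
  b0 \in B -> #|A| <= #|B| -> exists f : T1 -> T2, {in A &, injective f} /\ forall x, f x \in B.
Proof.
move=> hb hAB; exists (fun x => nth b0 (enum B) (index x (enum A))); split.
  move=> x y hx hy /eqP; rewrite nth_uniq ?enum_uniq //; last first.
  - by rewrite -cardE; apply: (leq_trans _ hAB); rewrite cardE index_mem mem_enum.
  - by rewrite -cardE; apply: (leq_trans _ hAB); rewrite cardE index_mem mem_enum.
  move=> /eqP h; rewrite -(@nth_index _ x x (enum A)) ?mem_enum //.
  by rewrite h nth_index ?mem_enum.
move=> x; case: (ltnP (index x (enum A)) (size (enum B))) => h.
  by rewrite -mem_enum mem_nth.
by rewrite nth_default.
Qed.

Definition pc (U : finType) (I : {set U}) (e : {set U}) : {set U} :=
  if [pick u in e | u \in I] is Some u then [set u] else e.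

Lemma pcI (U : finType) (E : {set {set U}}) (I : {set U}) (e : {set U}) u :
  is_graph E -> independent E I -> e \in E -> u \in e -> u \in I -> pc I e = [set u].
Proof.
move=> hg hI he hu huI; rewrite /pc; case: pickP => [u' /andP[hu' hu'I]|h]; last first.
  by move: (h u); rewrite /= hu huI.
congr [set _]; apply/eqP; apply/negPn/negP => hne.
have hsub : e \subset I.
  have /eqP/cards2P[a [b [hab eab]]] := hg e he.
  have : e = [set u'; u].
    apply/eqP; rewrite eq_sym eqEcard cards2 hne (hg e he) andbT.
    by rewrite subUset !sub1set hu hu'.
  by move=> ->; rewrite subUset !sub1set hu'I huI.
by move/forallP: hI => /(_ e); rewrite he hsub.
Qed.

Lemma pcD (U : finType) (I : {set U}) (e : {set U}) : [disjoint e & I] -> pc I e = e.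
Proof.
move=> hd; rewrite /pc; case: pickP => [u /andP[hu huI]|//].
by move: (disjointFr hd hu); rewrite huI.
Qed.

Lemma pc_cases (U : finType) (E : {set {set U}}) (I : {set U}) (e : {set U}) :
  is_graph E -> independent E I -> e \in E ->
  (exists2 u, u \in e & u \in I /\ pc I e = [set u]) \/ ([disjoint e & I] /\ pc I e = e).
Proof.
move=> hg hI he; have [hd|hd] := boolP [disjoint e & I]; first by right; rewrite pcD.
left; move: hd; rewrite disjoint_subset => /subsetPn[u hu]; rewrite !inE negbK => huI.
by exists u => //; split => //; apply: pcI hg hI he hu huI.
Qed.

Lemma pc_piece (U : finType) (E : {set {set U}}) (I : {set U}) (e : {set U}) :
  is_graph E -> independent E I -> e \in E -> pc I e \in pieces E I.
Proof.
move=> hg hI he; case: (pc_cases hg hI he) => [[u _ [huI ->]]|[hd ->]].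
  by rewrite inE; apply/orP; left; apply/imsetP; exists u.
by rewrite inE; apply/orP; right; rewrite inE he.
Qed.

Lemma pc_single (U : finType) (E : {set {set U}}) (I : {set U}) (e : {set U}) z :
  is_graph E -> independent E I -> e \in E -> pc I e = [set z] -> z \in e /\ z \in I.
Proof.
move=> hg hI he; case: (pc_cases hg hI he) => [[u hu [huI ->]]|[hd ->]].
  by move/set1_inj => <-.
by move=> h; have := hg e he; rewrite h cards1.
Qed.

Theorem proposition2p8 (U : finType) (E : {set {set U}}) (V : finType)
    (H : {set {set V}}) (S1 S2 V1 V2 : {set V}) (G1 G2 : {set {set V}}) :
  is_tree E ->
  is_3graph H ->
  #|S1| + 1 = sigma E -> #|S2| + 1 = sigma E -> S1 != S2 ->
  V1 \subset ~: (S1 :|: S2) -> V2 \subset ~: (S1 :|: S2) ->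
  V1 :&: V2 != set0 ->
  is_graph G1 -> (forall e, e \in G1 -> e \subset V1) ->
  is_graph G2 -> (forall e, e \in G2 -> e \subset V2) ->
  (forall v, v \in V1 -> 3 * #|U| <= deg G1 v) ->
  (forall v, v \in V2 -> 3 * #|U| <= deg G2 v) ->
  (forall v, v \in S1 -> G1 \subset link H v) ->
  (forall v, v \in S2 -> G2 \subset link H v) ->
  contains_expansion E H.
Proof.
move=> hT _ hs1 hs2 hS12 hV1 hV2 hV12 hG1 hG1V hG2 hG2V hd1 hd2 hl1 hl2.
have hg : is_graph E by case: hT.
have [I hI hcost] := sigma_att hg.
have hS1pos : 0 < #|S1|.
  rewrite lt0n; apply: contra hS12 => /eqP h0.
  have h0' : #|S2| = 0 by move: hs2; rewrite -hs1 h0; lia.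
  by rewrite (cards0_eq h0) (cards0_eq h0').
have /card_gt0P [s1 hs1m] := hS1pos.
have [s2 hs2S2 hs2S1] : exists2 s2, s2 \in S2 & s2 \notin S1.
  apply/subsetPn; apply: contra hS12 => hsub.
  by rewrite eq_sym eqEcard hsub /= -(leq_add2r 1) hs1 hs2.
have /set0Pn [c hc] := hV12.
have hE : 0 < #|E| by apply: leq_trans (sigma_le E); rewrite -hs1 addn1.
have /card_gt0P [e0 he0] := hE.
have [r hre0 hrI] : exists2 r, r \in e0 & r \notin I.
  by apply/subsetPn; move/forallP: hI => /(_ e0); rewrite he0.
have [rank [par [hinj hr0 hrU hpar hun]]] := tree_order r hT.
have hEp := edge_par hg hinj hr0 hun.
have [a har hea] := hEp e0 he0.
pose hasch q := [exists v, (v != r) && (par v == q)].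
have hpa : hasch (par a) by apply/existsP; exists a; rewrite har eqxx.
case: (arg_maxnP rank hpa) => q hq hmax.
have NC y v : rank q < rank y -> v != r -> par v != y.
  move=> hy hv; apply/negP => /eqP hpv.
  have : hasch y by apply/existsP; exists v; rewrite hv hpv eqxx.
  by move/hmax => /=; rewrite leqNgt hy.
have [w0 [P0 [hP0 hw0 hleaf]]] : exists w0 P0, [/\ P0 \in pieces E I, w0 \notin I &
    forall y e1 e2, y \notin I -> y != w0 -> e1 \in E -> e2 \in E -> y \in e1 -> y \in e2 ->
      pc I e1 = P0 -> pc I e2 = P0].
  have hind (x y : U) : x \in I -> y \in I -> [set x; y] \in E -> False.
    move=> hx hy he; move/forallP: hI => /(_ [set x; y]); rewrite he /=.
    by rewrite subUset !sub1set hx hy.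
  have hmem2 (z x y : U) : z \in [set x; y] -> z = x \/ z = y.
    by rewrite !inE => /orP[]/eqP ->; [left | right].
  have [hqI|hqI] := boolP (q \in I).
  - have hqr : q != r by apply: contraTneq hqI => ->.
    have /andP[/andP[_ heq] hlq] := hpar q hqr.
    exists (par q), [set q]; split.
    + by rewrite inE; apply/orP; left; apply/imsetP; exists q.
    + by apply/negP => hpI; apply: (hind q (par q)).
    move=> y e1 e2 hy hyw he1 he2 hy1 hy2 h1.
    have [hqe1 _] := pc_single hg hI he1 h1.
    have hyq : y != q by apply: contraNneq hy => ->.
    have [a1 ha1 hea1] := hEp e1 he1.
    have [hpy hyr] : par y = q /\ y != r.
      move: hy1 hqe1; rewrite hea1 => /hmem2 [] hy' /hmem2 [] hq'.
      + by move: hyq; rewrite hy' hq' eqxx.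
      + by rewrite hy' hq'.
      + by move: hyw; rewrite hy' hq' eqxx.
      + by move: hyq; rewrite hy' hq' eqxx.
    have /andP[_ hlt] := hpar y hyr; rewrite hpy in hlt.
    have [a2 ha2 hea2] := hEp e2 he2.
    move: hy2; rewrite hea2 => /hmem2 [] hya.
    + subst a2; rewrite -hea2; apply: (pcI hg hI he2) => //.
      by rewrite hea2 hpy !inE eqxx orbT.
    + by move: (NC y a2 hlt ha2); rewrite hya eqxx.
  - have /existsP[v /andP[hvr /eqP hpv]] := hq.
    have /andP[/andP[hvq hev] hlv] := hpar v hvr; rewrite hpv in hev hlv hvq.
    exists q.
    have [hvI|hvI] := boolP (v \in I).
    + exists [set v]; split => //.
        by rewrite inE; apply/orP; left; apply/imsetP; exists v.
      move=> y e1 e2 hy hyw he1 he2 hy1 hy2 h1; exfalso.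
      have [hve1 _] := pc_single hg hI he1 h1.
      have hyv : y != v by apply: contraNneq hy => ->.
      have [a1 ha1 hea1] := hEp e1 he1.
      move: hy1 hve1; rewrite hea1 => /hmem2 [] hy' /hmem2 [] hv'.
      * by move: hyv; rewrite hy' hv' eqxx.
      * by move: (NC v a1 hlv ha1); rewrite hv' eqxx.
      * by move: hyw; rewrite -hpv hy' hv' eqxx.
      * by move: hyv; rewrite hy' hv' eqxx.
    + have hd : [disjoint [set v; q] & I].
        rewrite disjoint_subset; apply/subsetP => z; rewrite !inE => /orP[]/eqP ->; by [].
      exists [set v; q]; split => //.
        by rewrite inE; apply/orP; right; rewrite inE hev.
      move=> y e1 e2 hy hyw he1 he2 hy1 hy2 h1.
      have he1v : e1 = [set v; q].
        case: (pc_cases hg hI he1) => [[u hu [huI hpu]]|[_ hpu]]; last by rewrite -hpu.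
        by move: h1; rewrite hpu => h; move: (cards1 u); rewrite h cards2 hvq.
      have hyv : y = v by move: hy1; rewrite he1v => /hmem2 [] // hyq; move: hyw; rewrite hyq eqxx.
      have [a2 ha2 hea2] := hEp e2 he2.
      move: hy2; rewrite hea2 hyv => /hmem2 [] hva.
      * by subst a2; rewrite hpv pcD.
      * by move: (NC v a2 hlv ha2); rewrite hva eqxx.
have hPc : #|pieces E I :\ P0| <= #|S1|.
  have := cardsD1 P0 (pieces E I); rewrite hP0 add1n => hc1.
  have : #|pieces E I| <= #|S1| + 1.
    rewrite hs1 hcost; apply: (leq_trans (leq_card_setU _ _)); rewrite leq_add2r.
    exact: leq_imset_card.
  by rewrite hc1 addn1 ltnS.
have [f [hfi hfS]] := inj_into hs1m hPc.
pose cen X := if X == P0 then s2 else f X.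
have hcenS X : cen X \in S1 :|: S2 by rewrite /cen; case: eqP => _; rewrite inE ?hfS ?hs2S2 ?orbT.
have hgen X : (if X == P0 then G2 else G1) \subset link H (cen X).
  by rewrite /cen; case: eqP => _; [apply: hl2 | apply: hl1].
apply: (@greedy U V E H I w0 c (fun b => if b then G2 else G1) (fun b => if b then V2 else V1)
          (fun e => pc I e == P0) cen) => //.
- by case.
- by case.
- by case.
- by case; move: hc; rewrite inE => /andP[].
- move=> X b; apply/negP => hv.
  have : cen X \in ~: (S1 :|: S2) by case: b hv => hv; [apply: (subsetP hV2) | apply: (subsetP hV1)].
  by rewrite inE hcenS.
- move=> X Y hX hY; rewrite /cen; case: eqP => hX0; case: eqP => hY0.
  + by rewrite hX0 hY0.
  + by move=> h; move: (hfS Y); rewrite -h (negbTE hs2S1).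
  + by move=> h; move: (hfS X); rewrite h (negbTE hs2S1).
  + by apply: hfi; rewrite in_setD1; apply/andP; split => //; apply/eqP.
- by move=> u e hu he hue; rewrite (pcI hg hI he hue hu); exact: hgen.
- by move=> e he hd; rewrite (pcD hd); exact: hgen.
- move=> y e1 e2 hy hyw he1 he2 hy1 hy2; apply/eqP/eqP => h.
    exact: (hleaf y e1 e2).
  exact: (hleaf y e2 e1).
Qed.
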